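(* Let $n\ge3$ and let $(c(t),\xi(t))$ be a $C^1$ solution of the Hamiltonian system below. Define $$l_3=\bar\xi_3+2c_1\bar\xi_4+\dots+(n-2)c_{n-3}\bar\xi_n .$$ Then (i) $\dot l_1=\bar l_2\,l_3$ and $\dot l_2=-\bar l_1\,l_3$; (ii) $|l_1|^2+|l_2|^2$ is constant in $t$, and consequently the energy $\frac12\bigl(|u_1|^2+|u_2|^2\bigr)$ with $u_1=\dot c_1$, $u_2=\dot c_2-2c_1\dot c_1$ (equivalently the Carnot–Carathéodory length of the tangent vector $\dot c=u_1L_1+u_2L_2$, with $L_1,L_2$ orthonormal) is conserved along the solution.
   Context: Complex-valued functions $c_1,\dots,c_n,\xi_1,\dots,\xi_n$ of a real variable $t$; $l_1=\bar\xi_1+2c_1\bar\xi_2+\dots+nc_{n-1}\bar\xi_n$, $l_2=\bar\xi_2+2c_1\bar\xi_3+\dots+(n-1)c_{n-2}\bar\xi_n$. The Hamiltonian system is $\dot c_1=\bar l_1$, $\dot c_2=2c_1\bar l_1+\bar l_2$, $\dot c_k=kc_{k-1}\bar l_1+(k-1)c_{k-2}\bar l_2$ ($k=3,\dots,n$), $\dot\xi_k=-(k+1)\xi_{k+1}l_1-(k+1)\xi_{k+2}l_2$ ($k=1,\dots,n-2$), $\dot\xi_{n-1}=-n\xi_nl_1$, $\dot\xi_n=0$. The vector fields are $L_j=\partial_j+\sum_{k=1}^{n-j}(k+1)c_k\partial_{j+k}$, $\partial_k=\partial/\partial c_k$. *)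

(* Defs.v *)
From Stdlib Require Import Reals.
From Coquelicot Require Import Coquelicot.
Open Scope R_scope.

(* Components are indexed by nat; only indices 1..n are meaningful. *)
Definition Cnat (k : nat) : C := RtoC (INR k).

Definition l1 (n : nat) (c xi : nat -> R -> C) (t : R) : C :=
  (Cconj (xi 1%nat t) +
   sum_n_m (fun k => Cnat k * c (k - 1)%nat t * Cconj (xi k t)) 2 n)%C.

Definition l2 (n : nat) (c xi : nat -> R -> C) (t : R) : C :=
  (Cconj (xi 2%nat t) +
   sum_n_m (fun k => Cnat (k - 1) * c (k - 2)%nat t * Cconj (xi k t)) 3 n)%C.

Definition l3 (n : nat) (c xi : nat -> R -> C) (t : R) : C :=
  (Cconj (xi 3%nat t) +
   sum_n_m (fun k => Cnat (k - 2) * c (k - 3)%nat t * Cconj (xi k t)) 4 n)%C.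

Definition inI (a b : Rbar) (t : R) : Prop := Rbar_lt a t /\ Rbar_lt t b.

Definition hamiltonian_C1_solution (n : nat) (a b : Rbar)
  (c xi dc dxi : nat -> R -> C) : Prop :=
  (forall k t, (1 <= k <= n)%nat -> inI a b t ->
     is_derive (c k) t (dc k t) /\ continuous (dc k) t /\
     is_derive (xi k) t (dxi k t) /\ continuous (dxi k) t) /\
  (forall t, inI a b t ->
     dc 1%nat t = Cconj (l1 n c xi t) /\
     dc 2%nat t = (Cnat 2 * c 1%nat t * Cconj (l1 n c xi t) + Cconj (l2 n c xi t))%C /\
     (forall k, (3 <= k <= n)%nat ->
        dc k t = (Cnat k * c (k - 1)%nat t * Cconj (l1 n c xi t)
                  + Cnat (k - 1) * c (k - 2)%nat t * Cconj (l2 n c xi t))%C) /\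
     (forall k, (1 <= k <= n - 2)%nat ->
        dxi k t = (- (Cnat (k + 1) * xi (k + 1)%nat t * l1 n c xi t)
                   - Cnat (k + 1) * xi (k + 2)%nat t * l2 n c xi t)%C) /\
     dxi (n - 1)%nat t = (- (Cnat n * xi n t * l1 n c xi t))%C /\
     dxi n t = RtoC 0).

(* Main.v *)
Require Import Defs.
From Stdlib Require Import Reals Lia Lra.
From Coquelicot Require Import Coquelicot.
Open Scope R_scope.
Lemma dC_fst (f : R -> C) x l : is_derive f x l -> is_derive (fun t => fst (f t)) x (fst l).
Proof.
  intros H. unfold is_derive in *.
  eapply filterdiff_ext_lin.
  apply (filterdiff_comp' f (fun z : C => fst z) x (fun y : R => scal y l) (fun z : C => fst z)).
  exact H. apply filterdiff_linear. apply (@is_linear_fst R_AbsRing R_NormedModule R_NormedModule).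
  intros y. simpl. reflexivity.
Qed.
Lemma dC_snd (f : R -> C) x l : is_derive f x l -> is_derive (fun t => snd (f t)) x (snd l).
Proof.
  intros H. unfold is_derive in *.
  eapply filterdiff_ext_lin.
  apply (filterdiff_comp' f (fun z : C => snd z) x (fun y : R => scal y l) (fun z : C => snd z)).
  exact H. apply filterdiff_linear. apply (@is_linear_snd R_AbsRing R_NormedModule R_NormedModule).
  intros y. simpl. reflexivity.
Qed.
Lemma dC_pair (f : R -> C) x a b : is_derive (fun t => fst (f t)) x a -> is_derive (fun t => snd (f t)) x b -> is_derive f x (a, b).
Proof.
  intros Ha Hb.
  assert (H := is_derive_plus _ _ x _ _ (@is_derive_scal_l R_AbsRing C_R_NormedModule _ x a (1,0)%R Ha)
     (@is_derive_scal_l R_AbsRing C_R_NormedModule _ x b (0,1)%R Hb)).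
  eapply is_derive_ext; [|replace (a,b) with (plus (scal a (1, 0)) (scal b (0, 1)) : C); [exact H|]].
  - intros t. apply injective_projections; cbn -[Rmult Rplus]; ring.
  - apply injective_projections; cbn -[Rmult Rplus]; ring.
Qed.

Lemma dR_mult (f g : R -> R) x a b : is_derive f x a -> is_derive g x b ->
  is_derive (fun t => f t * g t) x (a * g x + f x * b).
Proof. intros Hf Hg. apply (is_derive_mult f g x a b Hf Hg). intros; apply Rmult_comm. Qed.
Lemma dR_plus (f g : R -> R) x a b : is_derive f x a -> is_derive g x b ->
  is_derive (fun t => f t + g t) x (a + b).
Proof. intros Hf Hg. apply (is_derive_plus f g x a b Hf Hg). Qed.
Lemma dR_minus (f g : R -> R) x a b : is_derive f x a -> is_derive g x b ->
  is_derive (fun t => f t - g t) x (a - b).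
Proof. intros Hf Hg. apply (is_derive_minus f g x a b Hf Hg). Qed.
Lemma dR_opp (f : R -> R) x a : is_derive f x a ->
  is_derive (fun t => - f t) x (- a).
Proof. intros Hf. apply (is_derive_opp f x a Hf). Qed.

Lemma dC_mult (f g : R -> C) x a b : is_derive f x a -> is_derive g x b ->
  is_derive (fun t => (f t * g t)%C) x (a * g x + f x * b)%C.
Proof.
  intros Hf Hg.
  rewrite (surjective_pairing (a * g x + f x * b)%C). apply dC_pair.
  - eapply is_derive_ext. intros t. simpl. reflexivity.
    apply dC_fst in Hf as Hf1. apply dC_snd in Hf as Hf2. apply dC_fst in Hg as Hg1. apply dC_snd in Hg as Hg2.
    replace (fst (a * g x + f x * b)%C) with
      ((fst a * fst (g x) + fst (f x) * fst b) - (snd a * snd (g x) + snd (f x) * snd b)) by (simpl; ring).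
    apply dR_minus; apply dR_mult; assumption.
  - eapply is_derive_ext. intros t. simpl. reflexivity.
    apply dC_fst in Hf as Hf1. apply dC_snd in Hf as Hf2. apply dC_fst in Hg as Hg1. apply dC_snd in Hg as Hg2.
    replace (snd (a * g x + f x * b)%C) with
      ((fst a * snd (g x) + fst (f x) * snd b) + (snd a * fst (g x) + snd (f x) * fst b)) by (simpl; ring).
    apply dR_plus; apply dR_mult; assumption.
Qed.

Lemma dC_plus (f g : R -> C) x a b : is_derive f x a -> is_derive g x b ->
  is_derive (fun t => (f t + g t)%C) x (a + b)%C.
Proof. intros Hf Hg. apply (is_derive_plus f g x a b Hf Hg). Qed.

Lemma dC_conj (f : R -> C) x a : is_derive f x a ->
  is_derive (fun t => Cconj (f t)) x (Cconj a).
Proof.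
  intros Hf. rewrite (surjective_pairing (Cconj a)). apply dC_pair.
  - simpl. apply dC_fst in Hf. exact Hf.
  - simpl. apply dR_opp. apply dC_snd in Hf. exact Hf.
Qed.

Lemma dC_const (z : C) x : is_derive (fun _ : R => z) x (RtoC 0).
Proof. apply (@is_derive_const R_AbsRing C_R_NormedModule). Qed.

Lemma dC_sum (F dF : nat -> R -> C) x m N :
  (forall k, (m <= k <= N)%nat -> is_derive (F k) x (dF k x)) ->
  is_derive (fun t => sum_n_m (fun k => F k t) m N) x (sum_n_m (fun k => dF k x) m N).
Proof.
  induction N; intros H.
  - destruct m.
    + rewrite sum_n_n. apply (is_derive_ext (F 0%nat)). intros t. rewrite sum_n_n. reflexivity. apply H. lia.
    + rewrite sum_n_m_zero by lia. apply (is_derive_ext (fun _ : R => RtoC 0)). intros t. rewrite sum_n_m_zero by lia. reflexivity.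
      exact (dC_const _ x).
  - destruct (Compare_dec.le_lt_dec m (S N)).
    + rewrite sum_n_Sm by lia.
      apply (is_derive_ext (fun t => plus (sum_n_m (fun k => F k t) m N) (F (S N) t))).
      intros t. rewrite sum_n_Sm by lia. reflexivity.
      apply dC_plus. apply IHN. intros; apply H; lia. apply H; lia.
    + rewrite sum_n_m_zero by lia. apply (is_derive_ext (fun _ : R => RtoC 0)). intros t. rewrite sum_n_m_zero by lia. reflexivity.
      exact (dC_const _ x).
Qed.
Lemma Cnat_S m : Cnat (S m) = (Cnat m + 1)%C.
Proof. unfold Cnat. rewrite S_INR. now rewrite RtoC_plus. Qed.
Lemma Cnat_0 : Cnat 0 = RtoC 0.
Proof. reflexivity. Qed.
Lemma zeroC : (zero : C) = RtoC 0.
Proof. reflexivity. Qed.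
Lemma plusC (a b : C) : plus a b = (a + b)%C.
Proof. reflexivity. Qed.

Definition L3p (Cp Y : nat -> C) N : C := sum_n_m (fun k => Cnat (k-2) * Cp (k-3)%nat * Y k)%C 3 N.

Lemma L3p_S (Cp Y : nat -> C) m :
  L3p Cp Y (S (S m)) = (L3p Cp Y (S m) + Cnat m * Cp (m-1)%nat * Y (S (S m)))%C.
Proof.
  unfold L3p. destruct m.
  - rewrite !sum_n_m_zero by lia. rewrite Cnat_0, zeroC. ring.
  - rewrite sum_n_Sm by lia. rewrite plusC. cbn [Nat.sub]. reflexivity.
Qed.

Lemma core1 (n : nat) (Cp Y dCv dY : nat -> C) (A B : C) :
  Cp 0%nat = RtoC 1 ->
  (forall j, (1 <= j <= n)%nat -> dCv j = (Cnat j * Cp (j-1)%nat * A + Cnat (j-1) * Cp (j-2)%nat * B)%C) ->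
  (forall k, (1 <= k <= n)%nat -> dY k = (- (Cnat (S k) * Y (S k) * A) - Cnat (S k) * Y (S (S k)) * B)%C) ->
  forall N, (1 <= N <= n)%nat ->
  (dY 1%nat + sum_n_m (fun k => Cnat k * (dCv (k-1)%nat * Y k + Cp (k-1)%nat * dY k)) 2 N
  = B * L3p Cp Y N
    - A * (Cnat N * Cnat (S N) * Cp (N-1)%nat * Y (S N))
    - B * (Cnat (N-1) * Cnat N * Cp (N-2)%nat * Y (S N)
           + Cnat N * Cnat (S N) * Cp (N-1)%nat * Y (S (S N))))%C.
Proof.
  intros H0 HC HY N HN.
  induction N as [|N IH]; [lia|].
  destruct N as [|m].
  - rewrite sum_n_m_zero by lia. unfold L3p. rewrite sum_n_m_zero by lia.
    rewrite HY by lia. cbn [Nat.sub]. rewrite H0, !Cnat_S, Cnat_0, zeroC. ring.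
  - rewrite (sum_n_Sm _ 2 (S m)); [|lia].
    match goal with |- context [plus ?x ?y] => change (plus x y) with (Cplus x y) end.
    rewrite Cplus_assoc, IH by lia.
    cbn [Nat.sub]. rewrite L3p_S, (HC (S m)), (HY (S (S m))) by lia.
    cbn [Nat.sub]. rewrite !Nat.sub_0_r, !Cnat_S. ring.
Qed.

Lemma core2 (n : nat) (Cp Y dCv dY : nat -> C) (A B : C) :
  Cp 0%nat = RtoC 1 ->
  (forall j, (1 <= j <= n)%nat -> dCv j = (Cnat j * Cp (j-1)%nat * A + Cnat (j-1) * Cp (j-2)%nat * B)%C) ->
  (forall k, (1 <= k <= n)%nat -> dY k = (- (Cnat (S k) * Y (S k) * A) - Cnat (S k) * Y (S (S k)) * B)%C) ->
  forall N, (2 <= N <= n)%nat ->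
  (dY 2%nat + sum_n_m (fun k => Cnat (k-1) * (dCv (k-2)%nat * Y k + Cp (k-2)%nat * dY k)) 3 N
  = - (A * L3p Cp Y N)
    - A * (Cnat (S N) * Cnat (N-1) * Cp (N-2)%nat * Y (S N))
    - B * (Cnat (N-2) * Cnat N * Cp (N-3)%nat * Y (S N)
           + Cnat (N-1) * Cnat (S N) * Cp (N-2)%nat * Y (S (S N))))%C.
Proof.
  intros H0 HC HY N HN.
  induction N as [|N IH]; [lia|].
  destruct N as [|[|m]]; [lia| |].
  - rewrite sum_n_m_zero by lia. unfold L3p. rewrite sum_n_m_zero by lia.
    rewrite HY by lia. cbn [Nat.sub]. rewrite H0, !Cnat_S, Cnat_0, zeroC. ring.
  - rewrite (sum_n_Sm _ 3 (S (S m))); [|lia].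
    match goal with |- context [plus ?x ?y] => change (plus x y) with (Cplus x y) end.
    rewrite Cplus_assoc, IH by lia.
    cbn [Nat.sub]. rewrite (L3p_S _ _ (S m)), (HC (S m)), (HY (S (S (S m)))) by lia.
    cbn [Nat.sub]. rewrite !Nat.sub_0_r, !Cnat_S. ring.
Qed.
Lemma inI_between a b t s x : inI a b t -> inI a b s -> Rmin t s <= x <= Rmax t s -> inI a b x.
Proof.
  intros [Ht1 Ht2] [Hs1 Hs2] [H1 H2]. split.
  - apply Rbar_lt_le_trans with (Rmin t s). unfold Rmin; destruct (Rle_dec t s); assumption. simpl; exact H1.
  - apply Rbar_le_lt_trans with (Rmax t s). simpl; exact H2. unfold Rmax; destruct (Rle_dec t s); assumption.
Qed.
Lemma const_of_deriv0 (f : R -> R) a b :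
  (forall x, inI a b x -> is_derive f x 0) -> forall t s, inI a b t -> inI a b s -> f t = f s.
Proof.
  intros Hd t s Ht Hs.
  destruct (MVT_gen f t s (fun _ => 0)) as [y [_ Hy]].
  - intros x Hx. apply Hd. apply (inI_between a b t s x Ht Hs). lra.
  - intros x Hx. apply continuity_pt_filterlim. apply (@ex_derive_continuous R_AbsRing R_NormedModule). exists 0. apply Hd.
    apply (inI_between a b t s x Ht Hs). lra.
  - lra.
Qed.

Lemma is_derive_eq (f : R -> C) x (a b : C) : is_derive f x a -> a = b -> is_derive f x b.
Proof. intros H E; subst; exact H. Qed.

Lemma is_derive_eqR (f : R -> R) x (a b : R) : is_derive f x a -> a = b -> is_derive f x b.
Proof. intros H E; subst; exact H. Qed.

Lemma dterm (K : C) (f g : R -> C) x (df dg : C) : is_derive f x df -> is_derive g x dg ->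
  is_derive (fun t => (K * f t * g t)%C) x (K * (df * g x + f x * dg))%C.
Proof.
  intros Hf Hg. eapply is_derive_eq.
  apply dC_mult; [apply dC_mult; [apply dC_const|exact Hf]|exact Hg].
  cbv beta. ring.
Qed.

Lemma Cconj_R (r : R) : Cconj (RtoC r) = RtoC r.
Proof. apply injective_projections; simpl; ring. Qed.
Lemma Cnat_conj k : Cconj (Cnat k) = Cnat k.
Proof. apply Cconj_R. Qed.

Lemma Cmod_sq (z : C) : Cmod z ^ 2 = fst z * fst z + snd z * snd z.
Proof.
  unfold Cmod. rewrite <- Rsqr_pow2, Rsqr_sqrt. ring.
  apply Rplus_le_le_0_compat; apply pow2_ge_0.
Qed.

Theorem proposition5 (n : nat) (a b : Rbar) (c xi dc dxi : nat -> R -> C) :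
  (3 <= n)%nat ->
  hamiltonian_C1_solution n a b c xi dc dxi ->
  (* (i) *)
  (forall t, inI a b t ->
     is_derive (l1 n c xi) t (Cconj (l2 n c xi t) * l3 n c xi t)%C /\
     is_derive (l2 n c xi) t (- (Cconj (l1 n c xi t) * l3 n c xi t))%C) /\
  (* (ii) *)
  (forall t s, inI a b t -> inI a b s ->
     (Cmod (l1 n c xi t))^2 + (Cmod (l2 n c xi t))^2
     = (Cmod (l1 n c xi s))^2 + (Cmod (l2 n c xi s))^2) /\
  (forall t s, inI a b t -> inI a b s ->
     / 2 * ((Cmod (dc 1%nat t))^2
            + (Cmod (dc 2%nat t - Cnat 2 * c 1%nat t * dc 1%nat t)%C)^2)
     = / 2 * ((Cmod (dc 1%nat s))^2
            + (Cmod (dc 2%nat s - Cnat 2 * c 1%nat s * dc 1%nat s)%C)^2)).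
Proof.
  intros Hn [Hder Hsys].
  assert (Hi : forall t, inI a b t ->
     is_derive (l1 n c xi) t (Cconj (l2 n c xi t) * l3 n c xi t)%C /\
     is_derive (l2 n c xi) t (- (Cconj (l1 n c xi t) * l3 n c xi t))%C).
  { intros t Ht.
    destruct (Hsys t Ht) as (E1 & E2 & E3 & E4 & E5 & E6).
    pose (Cp := fun k => if Nat.eqb k 0 then RtoC 1 else c k t).
    pose (Y := fun k => if Nat.leb k n then Cconj (xi k t) else RtoC 0).
    assert (H0 : Cp 0%nat = RtoC 1) by reflexivity.
    assert (HC : forall j, (1 <= j <= n)%nat -> dc j t =
       (Cnat j * Cp (j-1)%nat * Cconj (l1 n c xi t) + Cnat (j-1) * Cp (j-2)%nat * Cconj (l2 n c xi t))%C).
    { intros j Hj. destruct j as [|[|[|j']]]; [lia| | | ].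
      - rewrite E1. unfold Cp; cbn [Nat.sub Nat.eqb]. rewrite Cnat_S, Cnat_0. ring.
      - rewrite E2. unfold Cp; cbn [Nat.sub Nat.eqb]. rewrite !Cnat_S, Cnat_0. ring.
      - rewrite E3 by lia. unfold Cp; cbn [Nat.sub Nat.eqb]. ring. }
    assert (HY : forall k, (1 <= k <= n)%nat -> Cconj (dxi k t) =
       (- (Cnat (S k) * Y (S k) * Cconj (l1 n c xi t)) - Cnat (S k) * Y (S (S k)) * Cconj (l2 n c xi t))%C).
    { intros k Hk. unfold Y. destruct (Compare_dec.le_lt_dec k (n-2)).
      - rewrite E4 by lia. rewrite (proj2 (Nat.leb_le (S k) n) ltac:(lia)).
        rewrite (proj2 (Nat.leb_le (S (S k)) n) ltac:(lia)).
        replace (k+1)%nat with (S k) by lia. replace (k+2)%nat with (S (S k)) by lia.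
        rewrite Cminus_conj, Copp_conj, !Cmult_conj, !Cnat_conj. ring.
      - destruct (Nat.eq_dec k (n-1)).
        + subst k. rewrite E5. replace (S (n-1)) with n by lia.
          rewrite (proj2 (Nat.leb_le n n) ltac:(lia)).
          rewrite (proj2 (Nat.leb_gt (S n) n) ltac:(lia)).
          rewrite Copp_conj, !Cmult_conj, !Cnat_conj. ring.
        + replace k with n by lia. rewrite E6.
          rewrite (proj2 (Nat.leb_gt (S n) n) ltac:(lia)).
          rewrite (proj2 (Nat.leb_gt (S (S n)) n) ltac:(lia)).
          rewrite Cconj_R. ring. }
    assert (YS : Y (S n) = RtoC 0).
    { unfold Y. rewrite (proj2 (Nat.leb_gt (S n) n) ltac:(lia)). reflexivity. }
    assert (YSS : Y (S (S n)) = RtoC 0).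
    { unfold Y. rewrite (proj2 (Nat.leb_gt (S (S n)) n) ltac:(lia)). reflexivity. }
    assert (HL3 : L3p Cp Y n = l3 n c xi t).
    { unfold L3p, l3. rewrite sum_Sn_m by lia. rewrite plusC. cbn [Nat.sub].
      unfold Cp at 1, Y at 1. cbn [Nat.eqb].
      rewrite (proj2 (Nat.leb_le 3 n) ltac:(lia)).
      rewrite (sum_n_m_ext_loc _ (fun k => Cnat (k - 2) * c (k - 3)%nat t * Cconj (xi k t))%C).
      rewrite Cnat_S, Cnat_0. ring.
      intros k Hk. unfold Cp, Y. rewrite (proj2 (Nat.leb_le k n) ltac:(lia)).
      rewrite (proj2 (Nat.eqb_neq (k-3) 0) ltac:(lia)). reflexivity. }
    split.
    - assert (Hd1 : is_derive (l1 n c xi) t (Cconj (dxi 1%nat t) +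
         sum_n_m (fun k => Cnat k * (dc (k-1)%nat t * Cconj (xi k t) + c (k-1)%nat t * Cconj (dxi k t))) 2 n)%C).
      { unfold l1. apply dC_plus.
        - apply dC_conj. apply (Hder 1%nat t); [lia|exact Ht].
        - apply (dC_sum (fun k t => Cnat k * c (k-1)%nat t * Cconj (xi k t))%C
                        (fun k t => Cnat k * (dc (k-1)%nat t * Cconj (xi k t) + c (k-1)%nat t * Cconj (dxi k t)))%C).
          intros k Hk. apply dterm.
          + apply (Hder (k-1)%nat t); [lia|exact Ht].
          + apply dC_conj. apply (Hder k t); [lia|exact Ht]. }
      eapply is_derive_eq; [exact Hd1|].
      rewrite (sum_n_m_ext_loc _ (fun k => Cnat k * (dc (k-1)%nat t * Y k + Cp (k-1)%nat * Cconj (dxi k t)))%C).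
      2:{ intros k Hk. unfold Y, Cp. rewrite (proj2 (Nat.leb_le k n) ltac:(lia)).
          rewrite (proj2 (Nat.eqb_neq (k-1) 0) ltac:(lia)). reflexivity. }
      pose proof (core1 n Cp Y (fun j => dc j t) (fun k => Cconj (dxi k t))
                   (Cconj (l1 n c xi t)) (Cconj (l2 n c xi t)) H0 HC HY n ltac:(lia)) as K.
      cbv beta in K. rewrite K, YS, YSS, HL3. ring.
    - assert (Hd2 : is_derive (l2 n c xi) t (Cconj (dxi 2%nat t) +
         sum_n_m (fun k => Cnat (k-1) * (dc (k-2)%nat t * Cconj (xi k t) + c (k-2)%nat t * Cconj (dxi k t))) 3 n)%C).
      { unfold l2. apply dC_plus.
        - apply dC_conj. apply (Hder 2%nat t); [lia|exact Ht].
        - apply (dC_sum (fun k t => Cnat (k-1) * c (k-2)%nat t * Cconj (xi k t))%C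
                        (fun k t => Cnat (k-1) * (dc (k-2)%nat t * Cconj (xi k t) + c (k-2)%nat t * Cconj (dxi k t)))%C).
          intros k Hk. apply dterm.
          + apply (Hder (k-2)%nat t); [lia|exact Ht].
          + apply dC_conj. apply (Hder k t); [lia|exact Ht]. }
      eapply is_derive_eq; [exact Hd2|].
      rewrite (sum_n_m_ext_loc _ (fun k => Cnat (k-1) * (dc (k-2)%nat t * Y k + Cp (k-2)%nat * Cconj (dxi k t)))%C).
      2:{ intros k Hk. unfold Y, Cp. rewrite (proj2 (Nat.leb_le k n) ltac:(lia)).
          rewrite (proj2 (Nat.eqb_neq (k-2) 0) ltac:(lia)). reflexivity. }
      pose proof (core2 n Cp Y (fun j => dc j t) (fun k => Cconj (dxi k t))
                   (Cconj (l1 n c xi t)) (Cconj (l2 n c xi t)) H0 HC HY n ltac:(lia)) as K.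
      cbv beta in K. rewrite K, YS, YSS, HL3. ring. }
  assert (Hii : forall t s, inI a b t -> inI a b s ->
     (Cmod (l1 n c xi t))^2 + (Cmod (l2 n c xi t))^2
     = (Cmod (l1 n c xi s))^2 + (Cmod (l2 n c xi s))^2).
  { apply (const_of_deriv0 (fun t => (Cmod (l1 n c xi t))^2 + (Cmod (l2 n c xi t))^2) a b).
    intros x Hx. destruct (Hi x Hx) as [D1 D2].
    apply (is_derive_ext (fun t => (fst (l1 n c xi t) * fst (l1 n c xi t) + snd (l1 n c xi t) * snd (l1 n c xi t))
        + (fst (l2 n c xi t) * fst (l2 n c xi t) + snd (l2 n c xi t) * snd (l2 n c xi t)))).
    { intros t. rewrite !Cmod_sq. reflexivity. }
    apply dC_fst in D1 as F1. apply dC_snd in D1 as S1. apply dC_fst in D2 as F2. apply dC_snd in D2 as S2.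
    eapply is_derive_eqR.
    apply dR_plus; apply dR_plus; apply dR_mult; eassumption.
    simpl. ring. }
  split; [exact Hi|]. split; [exact Hii|].
  intros t s Ht Hs.
  destruct (Hsys t Ht) as (E1 & E2 & _). destruct (Hsys s Hs) as (F1 & F2 & _).
  rewrite E1, E2, F1, F2.
  replace (Cnat 2 * c 1%nat t * Cconj (l1 n c xi t) + Cconj (l2 n c xi t) - Cnat 2 * c 1%nat t * Cconj (l1 n c xi t))%C
    with (Cconj (l2 n c xi t)) by ring.
  replace (Cnat 2 * c 1%nat s * Cconj (l1 n c xi s) + Cconj (l2 n c xi s) - Cnat 2 * c 1%nat s * Cconj (l1 n c xi s))%C
    with (Cconj (l2 n c xi s)) by ring.
  rewrite !Cmod_conj. rewrite (Hii t s Ht Hs). reflexivity.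
Qed.
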